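(* Let $M$ be a finite $\Sigma$-Rickart right $R$-module. Then: (i) for all integers $m,n>0$, $M^{(m)}$ is $M^{(n)}$-Rickart; (ii) for every $K\in\mathrm{add}(M)$, the intersection of two finitely $M$-generated submodules of $K$ is finitely $M$-generated; (iii) the intersection of two finitely $M$-generated submodules of $M$ is finitely $M$-generated.
   Context: Modules are unitary right $R$-modules; $M^{(n)}$ is the direct sum of $n$ copies of $M$. $M$ is Rickart if $\ker\varphi$ is a direct summand of $M$ for all $\varphi\in\mathrm{End}_R(M)$; $M$ is finite $\Sigma$-Rickart if $M^{(n)}$ is Rickart for all $n>0$. A module $A$ is $N$-Rickart if $\ker\rho$ is a direct summand of $A$ for every $\rho\in\mathrm{Hom}_R(A,N)$. $\mathrm{add}(M)$ is the class of modules isomorphic to a direct summand of $M^{(n)}$ for some integer $n>0$. A module $N$ is finitely $M$-generated if there is an epimorphism $M^{(n)}\to N$ for some integer $n>0$. *)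

(* Defs.v *)
From HB Require Import structures.
From mathcomp Require Import all_boot all_order all_algebra.
Set Implicit Arguments. Unset Strict Implicit. Unset Printing Implicit Defensive.
Import GRing.Theory.
Local Open Scope ring_scope.

(* Right R-modules are modelled as left modules over the converse ring R^c. *)

Definition dsum (R : nzRingType) (M : lmodType R) (n : nat) : lmodType R :=
  {ffun 'I_n -> M}.

Section ModDefs.
Variable R : nzRingType.

Definition submodule (M : lmodType R) (S : M -> Prop) : Prop :=
  S 0 /\ (forall x y, S x -> S y -> S (x + y)) /\ (forall (a : R) x, S x -> S (a *: x)).

Definition direct_summand (M : lmodType R) (S : M -> Prop) : Prop :=
  submodule S /\ exists T : M -> Prop, submodule T /\
    (forall x, S x -> T x -> x = 0) /\
    (forall x, exists s t, S s /\ T t /\ x = s + t).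

Definition kernel (M N : lmodType R) (f : {linear M -> N}) : M -> Prop :=
  fun x => f x = 0.

Definition image (M N : lmodType R) (f : {linear M -> N}) : N -> Prop :=
  fun y => exists x, f x = y.

Definition rel_Rickart (A N : lmodType R) : Prop :=
  forall rho : {linear A -> N}, direct_summand (kernel rho).

Definition Rickart (M : lmodType R) : Prop :=
  forall phi : {linear M -> M}, direct_summand (kernel phi).

Definition finite_Sigma_Rickart (M : lmodType R) : Prop :=
  forall n : nat, (0 < n)%N -> Rickart (dsum M n).

Definition in_add (M K : lmodType R) : Prop :=
  exists n : nat, (0 < n)%N /\ exists f : {linear K -> dsum M n},
    injective f /\ direct_summand (image f).

Definition fin_gen (M K : lmodType R) (N : K -> Prop) : Prop :=
  exists n : nat, (0 < n)%N /\ exists g : {linear dsum M n -> K},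
    forall y, N y <-> image g y.

End ModDefs.

(* Main.v *)
Require Import Defs.
From HB Require Import structures.
From mathcomp Require Import all_boot all_order all_algebra.
From Stdlib Require Import ClassicalEpsilon.
Import GRing.Theory.
Local Open Scope ring_scope.

Definition mkLin (R : pzRingType) (U V : lmodType R) (f : U -> V) (H : linear f) : {linear U -> V} :=
  HB.pack f (GRing.isLinear.Build R U V _ f H).

Lemma ds_iff (R : nzRingType) (M : lmodType R) (S S' : M -> Prop) :
  (forall x, S x <-> S' x) -> direct_summand S -> direct_summand S'.
Proof.
move=> E [[S0 [SD SZ]] [T [TS [ST C]]]]; split.
  split; first by apply/E.
  split; [move=> x y /E Hx /E Hy; apply/E; exact: SD|move=> a x /E Hx; apply/E; exact: SZ].
exists T; split=> //; split; first by move=> x /E; apply: ST.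
by move=> x; have [s [t [Ss [Tt ->]]]] := C x; exists s, t; split=> //; apply/E.
Qed.

Lemma ds_proj (R : nzRingType) (M : lmodType R) (S : M -> Prop) :
  direct_summand S -> exists p : {linear M -> M},
    (forall x, S (p x)) /\ (forall x, S x -> p x = x).
Proof.
move=> [[S0 [SD SZ]] [T [[T0 [TD TZ]] [ST C]]]].
have C' : forall x, {s | exists t, S s /\ T t /\ x = s + t}.
  move=> x; apply: constructive_indefinite_description.
  by have [s [t H]] := C x; exists s, t.
pose p x := proj1_sig (C' x).
have pS x : S (p x) by rewrite /p; case: (C' x) => s [t [H1 H2]]; exact: H1.
have uniq x s t : S s -> T t -> x = s + t -> p x = s.
  move=> Ss Tt Ex; rewrite /p; case: (C' x) => s' [t' [Ss' [Tt' Ex']]] /=.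
  apply/eqP; rewrite -subr_eq0; apply/eqP; apply: ST.
    by apply: SD => //; rewrite -scaleN1r; apply: SZ.
  have -> : s' - s = t - t'.
    have -> : s' = s + t - t' by rewrite -Ex Ex' addrK.
    by rewrite addrAC (addrAC s) subrr add0r.
  by apply: TD => //; rewrite -scaleN1r; apply: TZ.
have lin : linear p.
  move=> a u v.
  have [tu [_ [Ttu Eu]]] : exists t, S (p u) /\ T t /\ u = p u + t.
    by rewrite /p; case: (C' u) => s [t H]; exists t.
  have [tv [_ [Ttv Ev]]] : exists t, S (p v) /\ T t /\ v = p v + t.
    by rewrite /p; case: (C' v) => s [t H]; exists t.
  apply: (uniq _ _ (a *: tu + tv)).
  - by apply: SD => //; apply: SZ.
  - by apply: TD => //; apply: TZ.
  - by rewrite {1}Eu {1}Ev scalerDr -!addrA; congr (_ + _); rewrite addrCA.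
exists (@mkLin _ _ _ _ lin); split=> // x Sx /=.
by apply: (uniq x x 0) => //; rewrite addr0.
Qed.

Section Maps.
End Maps.

Definition lft (R : nzRingType) (M : lmodType R) m n (f : dsum M (m + n)) : dsum M m :=
  [ffun i => f (lshift n i)].
Definition rgt (R : nzRingType) (M : lmodType R) m n (f : dsum M (m + n)) : dsum M n :=
  [ffun i => f (rshift m i)].
Definition inl_ (R : nzRingType) (M : lmodType R) m n (x : dsum M m) : dsum M (m + n) :=
  [ffun j => match split j with inl i => x i | inr _ => 0 end].
Definition inr_ (R : nzRingType) (M : lmodType R) m n (x : dsum M n) : dsum M (m + n) :=
  [ffun j => match split j with inl _ => 0 | inr i => x i end].

Arguments lft {R M m} n f.
Arguments rgt {R M} m {n} f.
Arguments inl_ {R M m} n x.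
Arguments inr_ {R M} m {n} x.

Lemma split_l m n (i : 'I_m) : split (lshift n i) = inl i.
Proof. by rewrite -[lshift n i]/(unsplit (inl i)) unsplitK. Qed.
Lemma split_r m n (i : 'I_n) : split (rshift m i) = inr i.
Proof. by rewrite -[rshift m i]/(unsplit (inr i)) unsplitK. Qed.

Section MapFacts.
Lemma lft_lin (R : nzRingType) (M : lmodType R) m n : linear (@lft R M m n).
Proof. by move=> a u v; apply/ffunP=> i; rewrite !ffunE. Qed.
Lemma rgt_lin (R : nzRingType) (M : lmodType R) m n : linear (@rgt R M m n).
Proof. by move=> a u v; apply/ffunP=> i; rewrite !ffunE. Qed.
Lemma inl_lin (R : nzRingType) (M : lmodType R) m n : linear (@inl_ R M m n).
Proof.
move=> a u v; apply/ffunP=> i; rewrite !ffunE; case: split => j /=. 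
all: try by rewrite !ffunE. all: by rewrite scaler0 addr0.
Qed.
Lemma inr_lin (R : nzRingType) (M : lmodType R) m n : linear (@inr_ R M m n).
Proof.
move=> a u v; apply/ffunP=> i; rewrite !ffunE; case: split => j /=.
all: try by rewrite !ffunE. all: by rewrite scaler0 addr0.
Qed.
Lemma lft_inl (R : nzRingType) (M : lmodType R) m n x : @lft R M m n (inl_ n x) = x.
Proof. by apply/ffunP=> i; rewrite !ffunE split_l. Qed.
Lemma rgt_inr (R : nzRingType) (M : lmodType R) m n x : @rgt R M m n (inr_ m x) = x.
Proof. by apply/ffunP=> i; rewrite !ffunE split_r. Qed.
Lemma lft_inr (R : nzRingType) (M : lmodType R) m n x : @lft R M m n (inr_ m x) = 0.
Proof. by apply/ffunP=> i; rewrite !ffunE split_l. Qed.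
Lemma rgt_inl (R : nzRingType) (M : lmodType R) m n x : @rgt R M m n (inl_ n x) = 0.
Proof. by apply/ffunP=> i; rewrite !ffunE split_r. Qed.
End MapFacts.
HB.instance Definition _ (R : nzRingType) (M : lmodType R) m n :=
  GRing.isLinear.Build R (dsum M (m + n)) (dsum M m) _ (@lft R M m n) (@lft_lin R M m n).
HB.instance Definition _ (R : nzRingType) (M : lmodType R) m n :=
  GRing.isLinear.Build R (dsum M (m + n)) (dsum M n) _ (@rgt R M m n) (@rgt_lin R M m n).
HB.instance Definition _ (R : nzRingType) (M : lmodType R) m n :=
  GRing.isLinear.Build R (dsum M m) (dsum M (m + n)) _ (@inl_ R M m n) (@inl_lin R M m n).
HB.instance Definition _ (R : nzRingType) (M : lmodType R) m n :=
  GRing.isLinear.Build R (dsum M n) (dsum M (m + n)) _ (@inr_ R M m n) (@inr_lin R M m n).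


Lemma part1 (R : nzRingType) (M : lmodType R) :
  finite_Sigma_Rickart M ->
  forall m n : nat, (0 < m)%N -> (0 < n)%N -> rel_Rickart (dsum M m) (dsum M n).
Proof.
move=> FS m n m0 n0 rho.
have linphi : linear (fun z : dsum M (m + n) => inr_ m (rho (lft n z))).
  by move=> a u v; rewrite /= lft_lin linearP inr_lin.
pose phi := @mkLin _ _ _ _ linphi.
have H := FS (m + n)%N (ltn_addr _ m0) phi.
have [[S0 [SD SZ]] [T [[T0 [TD TZ]] [ST C]]]] : direct_summand (fun z => rho (lft n z) = 0).
  apply: (@ds_iff _ _ (kernel phi)); last exact: H.
  move=> z; rewrite /kernel /=; split=> [E|->].
    by rewrite -(@rgt_inr _ _ m n (rho (lft n z))) E linear0.
  by rewrite linear0.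
split.
  split; first by rewrite /kernel linear0.
  split; first by move=> x y; rewrite /kernel linearD => -> ->; rewrite addr0.
  by move=> a x; rewrite /kernel linearZ_LR => ->; rewrite scaler0.
exists (fun x => exists t, T t /\ x = lft n t); split.
  split; first by exists 0; rewrite linear0.
  split.
    by move=> x y [t [Tt ->]] [u [Tu ->]]; exists (t + u); rewrite linearD; split=> //; apply: TD.
  by move=> a x [t [Tt ->]]; exists (a *: t); rewrite linearZ; split=> //; apply: TZ.
split.
  move=> x Kx [t [Tt Ex]]; subst x.
  by rewrite (ST t) ?linear0.
move=> x; have [s [t [Ss [Tt E]]]] := C (inl_ n x).
exists (lft n s), (lft n t); split=> //; split; first by exists t.
by rewrite -linearD -E /= lft_inl.
Qed.

Lemma part2 (R : nzRingType) (M : lmodType R) :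
  finite_Sigma_Rickart M ->
  forall (K : lmodType R) n, (0 < n)%N -> forall f : {linear K -> dsum M n}, injective f ->
  forall N1 N2 : K -> Prop,
  fin_gen M N1 -> fin_gen M N2 -> fin_gen M (fun x => N1 x /\ N2 x).
Proof.
move=> FS K n n0 f finj N1 N2 [a [a0 [g1 E1]]] [b [b0 [g2 E2]]].
have linh : linear (fun z : dsum M (a + b) => f (g1 (lft b z)) - f (g2 (rgt a z))).
  move=> c u v; rewrite /= !linearP /= scalerBr scalerN -!addrA; congr (_ + _).
  by rewrite addrCA.
pose h := @mkLin _ _ _ _ linh.
have [p [pK pid]] := @ds_proj _ _ _ (@part1 _ _ FS _ _ (ltn_addr b a0) n0 h).
have ling : linear (fun z => g1 (lft b (p z))) by move=> c u v; rewrite /= !linearP.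
exists (a + b)%N; split; first exact: ltn_addr.
exists (@mkLin _ _ _ _ ling) => y; split.
  move=> [/E1 [x Hx] /E2 [x' Hx']]; exists (inl_ b x + inr_ a x') => /=.
  rewrite pid; first by rewrite linearD /= lft_inl lft_inr addr0.
  rewrite /kernel /= !linearD /= lft_inl lft_inr rgt_inl rgt_inr !linear0 addr0 ?oppr0 ?add0r ?sub0r.
  by rewrite Hx Hx' subrr.
move=> [z <-] /=; have := pK z; rewrite /kernel /= => /eqP; rewrite subr_eq0 => /eqP /finj e.
split; [apply/E1; exists (lft b (p z))|apply/E2; exists (rgt a (p z))] => //.
Qed.

Theorem mainTheorem2 (R : nzRingType) (M : lmodType R^c) :
  finite_Sigma_Rickart M ->
  (forall m n : nat, (0 < m)%N -> (0 < n)%N -> rel_Rickart (dsum M m) (dsum M n))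
  /\
  (forall K : lmodType R^c, in_add M K ->
     forall N1 N2 : K -> Prop, submodule N1 -> submodule N2 ->
       fin_gen M N1 -> fin_gen M N2 -> fin_gen M (fun x => N1 x /\ N2 x))
  /\
  (forall N1 N2 : M -> Prop, submodule N1 -> submodule N2 ->
       fin_gen M N1 -> fin_gen M N2 -> fin_gen M (fun x => N1 x /\ N2 x)).
Proof.
move=> FS; split; first exact: part1.
split.
  move=> K [n [n0 [f [finj _]]]] N1 N2 _ _.
  exact: (@part2 _ _ FS K n n0 f finj).
move=> N1 N2 _ _.
have linc : linear (fun x : M => [ffun _ : 'I_1 => x] : dsum M 1).
  by move=> a u v; apply/ffunP=> i; rewrite !ffunE.
apply: (@part2 _ _ FS M 1 isT (@mkLin _ _ _ _ linc)).
by move=> x y /= /ffunP /(_ ord0); rewrite !ffunE.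
Qed.
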